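(* Let $n\ge 3$ and $w(A,B)\in\mathbb F_2=\langle A,B\rangle$. For every $1\le i\le n-2$, $$\Big[Q_n^i,\big[M_n^{i+1},P_n^{i+2}\big]\Big]\le\operatorname{Ker}(\Theta_n^w),$$ where $Q_n^i=\langle t_{i,i+1},\,e_{i,i+1,i+2}\rangle$, $M_n^{i+1}=\langle t_{i+1,i+2},\,d_{i,i+1,i+2}\rangle$, $P_n^{i+2}=\langle t_{i,i+2}\rangle$ are subgroups of $FVB_n$, and for subgroups $H,K$, $[H,K]$ denotes the subgroup generated by all commutators $[h,k]=hkh^{-1}k^{-1}$, $h\in H$, $k\in K$.
   Context: For $n\ge 2$, the flat virtual braid group $FVB_n$ is the group with generators $\sigma_1,\dots,\sigma_{n-1},\rho_1,\dots,\rho_{n-1}$ and defining relations: $\sigma_i^2=1$, $\rho_i^2=1$ for $1\le i\le n-1$; $\sigma_i\sigma_{i+1}\sigma_i=\sigma_{i+1}\sigma_i\sigma_{i+1}$, $\rho_i\rho_{i+1}\rho_i=\rho_{i+1}\rho_i\rho_{i+1}$ and $\rho_i\rho_{i+1}\sigma_i=\sigma_{i+1}\rho_i\rho_{i+1}$ for $1\le i\le n-2$; $\sigma_i\sigma_j=\sigma_j\sigma_i$, $\rho_i\rho_j=\rho_j\rho_i$ and $\rho_i\sigma_j=\sigma_j\rho_i$ for $|i-j|\ge 2$. $\mathbb F_{2n}$ is the free group on $x_1,\dots,x_n,y_1,\dots,y_n$; automorphisms compose left to right, $(\varphi\psi)(f)=\psi(\varphi(f))$, so that $\Theta(\beta\gamma)(f)=\Theta(\gamma)(\Theta(\beta)(f))$;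 generators not mentioned are fixed. For $w(A,B)\in\mathbb F_2$, $\Theta_n^w\colon FVB_n\to\mathrm{Aut}(\mathbb F_{2n})$ is the homomorphism given by $\Theta_n^w(\sigma_i): x_i\mapsto x_{i+1}w(y_i,y_{i+1}),\ x_{i+1}\mapsto x_i w(y_i,y_{i+1})^{-1}$ and $\Theta_n^w(\rho_i): x_i\mapsto x_{i+1},\ x_{i+1}\mapsto x_i,\ y_i\mapsto y_{i+1},\ y_{i+1}\mapsto y_i$. In $FVB_n$ define $\lambda_{i,i+1}=\rho_i\sigma_i$ for $1\le i\le n-1$ and $\lambda_{i,j}=\rho_{j-1}\rho_{j-2}\cdots\rho_{i+1}\,\lambda_{i,i+1}\,\rho_{i+1}\cdots\rho_{j-2}\rho_{j-1}$ for $j-i\ge 2$. Define $t_{i,j}=\lambda_{i,j}^2$ ($1\le i<j\le n$), $d_{i,j,k}=\lambda_{j,k}^{-1}\lambda_{i,j}^{-1}\lambda_{j,k}\lambda_{i,k}$ and $e_{i,j,k}=\lambda_{j,k}^{-1}\lambda_{i,j}^{-1}\lambda_{i,k}\lambda_{i,j}$ ($1\le i<j<k\le n$). *)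

(* Defs.v *)
From mathcomp Require Import all_boot.
Set Implicit Arguments. Unset Strict Implicit. Unset Printing Implicit Defensive.

(* A letter is ((isY, k), inverted): x_k = ((false,k),false), y_k = ((true,k),false). *)
Definition letter := ((bool * nat) * bool)%type.
Definition Fx (k : nat) : letter := ((false, k), false).
Definition Fy (k : nat) : letter := ((true, k), false).
Definition linv (l : letter) : letter := (l.1, ~~ l.2).
Definition winv (u : seq letter) : seq letter := rev (map linv u).

Definition ccons (l : letter) (s : seq letter) : seq letter :=
  match s with
  | l' :: s' => if l' == linv l then s' else l :: s
  | [::] => [:: l]
  end.
Definition freduce (u : seq letter) : seq letter := foldr ccons [::] u.
Definition reduced (u : seq letter) : bool := freduce u == u.
Definition in_F2n (n : nat) (u : seq letter) : bool :=
  all (fun l => (1 <= l.1.2 <= n)%N) u.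

(* An endomorphism of the free group given by the images of the generators;
   applying it to a word = substitute and freely reduce. *)
Definition fapply (img : bool * nat -> seq letter) (u : seq letter) : seq letter :=
  freduce (flatten (map (fun l => if l.2 then winv (img l.1) else img l.1) u)).

(* a letter of F_2 = (isB, inverted); w is any word in A^{+-1}, B^{+-1} *)
Definition w_at (w : seq (bool * bool)) (a b : nat) : seq letter :=
  map (fun c => ((true, if c.1 then b else a), c.2)) w.

Inductive fvb_gen := Sig of nat | Rho of nat.

Definition theta_gen_img (w : seq (bool * bool)) (g : fvb_gen) : bool * nat -> seq letter :=
  match g with
  | Sig i => fun v =>
      if v == (false, i) then Fx i.+1 :: w_at w i i.+1
      else if v == (false, i.+1) then Fx i :: winv (w_at w i i.+1)
      else [:: (v, false)]
  | Rho i => fun v =>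
      if v == (false, i) then [:: Fx i.+1]
      else if v == (false, i.+1) then [:: Fx i]
      else if v == (true, i) then [:: Fy i.+1]
      else if v == (true, i.+1) then [:: Fy i]
      else [:: (v, false)]
  end.

(* Elements of FVB_n are represented by words in the generators (all generators
   are involutions in FVB_n, so inverses are not needed as letters). Product is
   concatenation, inverse is reversal. Theta(beta gamma) = Theta(beta) then
   Theta(gamma) (left-to-right composition). *)
Definition theta (w : seq (bool * bool)) (g : seq fvb_gen) (f : seq letter) : seq letter :=
  foldl (fun f s => fapply (theta_gen_img w s) f) f g.

Definition in_ker (n : nat) (w : seq (bool * bool)) (g : seq fvb_gen) : Prop :=
  forall f : seq letter, in_F2n n f -> reduced f -> theta w g f = f.

Definition ginv (g : seq fvb_gen) : seq fvb_gen := rev g.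

Definition lam (i j : nat) : seq fvb_gen :=
  let rhos := map Rho (iota i.+1 (j - i.+1)) in
  rev rhos ++ [:: Rho i; Sig i] ++ rhos.
Definition tt (i j : nat) : seq fvb_gen := lam i j ++ lam i j.
Definition dd (i j k : nat) : seq fvb_gen :=
  ginv (lam j k) ++ ginv (lam i j) ++ lam j k ++ lam i k.
Definition ee (i j k : nat) : seq fvb_gen :=
  ginv (lam j k) ++ ginv (lam i j) ++ lam i k ++ lam i j.

Inductive gen_by (S : seq fvb_gen -> Prop) : seq fvb_gen -> Prop :=
  | gen_base s : S s -> gen_by S s
  | gen_one : gen_by S [::]
  | gen_mul a b : gen_by S a -> gen_by S b -> gen_by S (a ++ b)
  | gen_inv a : gen_by S a -> gen_by S (ginv a).

Definition comm (h k : seq fvb_gen) : seq fvb_gen := h ++ k ++ ginv h ++ ginv k.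

Definition comm_sub (H K : seq fvb_gen -> Prop) : seq fvb_gen -> Prop :=
  gen_by (fun c => exists h k, H h /\ K k /\ c = comm h k).

Definition Qsub (i : nat) := gen_by (fun s => s = tt i i.+1 \/ s = ee i i.+1 i.+2).
Definition Msub (i : nat) := gen_by (fun s => s = tt i.+1 i.+2 \/ s = dd i i.+1 i.+2).
Definition Psub (i : nat) := gen_by (fun s => s = tt i i.+2).

(* Main.v *)
Require Import Defs.
From mathcomp Require Import all_boot zify.
Set Implicit Arguments. Unset Strict Implicit. Unset Printing Implicit Defensive.


Fixpoint nored (s : seq letter) : bool :=
  match s with a :: ((b :: _) as t) => (b != linv a) && nored t | _ => true end.

Lemma linvK l : linv (linv l) = l.
Proof. by case: l => a b; rewrite /linv /= negbK. Qed.

Lemma winvK u : winv (winv u) = u.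
Proof. by rewrite /winv map_rev revK -map_comp (eq_map linvK) map_id. Qed.

Lemma winv_cat u v : winv (u ++ v) = winv v ++ winv u.
Proof. by rewrite /winv map_cat rev_cat. Qed.

Lemma winv_cons l u : winv (l :: u) = winv u ++ [:: linv l].
Proof. by rewrite /winv /= rev_cons cats1. Qed.

Lemma ccons_nored l s : nored s -> nored (ccons l s).
Proof.
case: s => [|b t] //= H.
case: ifP => E; last by rewrite /= E H.
by case: t H => [|c t] //= /andP[].
Qed.

Lemma foldr_nored s u : nored s -> nored (foldr ccons s u).
Proof. by elim: u => //= a u IH H; apply: ccons_nored; apply: IH. Qed.

Lemma freduce_nored u : nored (freduce u).
Proof. exact: foldr_nored. Qed.

Lemma nored_freduce s : nored s -> freduce s = s.
Proof.
elim: s => //= a t IH.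
case: t IH => [|b t] IH //=.
case/andP=> nb nt; change (ccons a (freduce (b :: t)) = a :: b :: t).
by rewrite IH //= (negbTE nb).
Qed.

Lemma freduceK u : freduce (freduce u) = freduce u.
Proof. apply: nored_freduce; exact: freduce_nored. Qed.

Lemma ccons_cancel l s : nored s -> ccons l (ccons (linv l) s) = s.
Proof.
case: s => [|b t] /=.
  by rewrite eqxx.
move=> H; case: ifP => E.
  move/eqP: E => E; rewrite linvK in E; subst b.
  case: t H => [|c t] //= /andP[nc _].
  by rewrite (negbTE nc).
by rewrite /= eqxx.
Qed.

Lemma foldr_ccons_lcons l s r : nored s -> nored r ->
  foldr ccons s (ccons l r) = ccons l (foldr ccons s r).
Proof.
move=> ns; case: r => [|b t] //= nr.
case: ifP => E //=.
move/eqP: E => ->; rewrite ccons_cancel //.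
apply: foldr_nored => //.
Qed.

Lemma foldr_red s u : nored s -> foldr ccons s (freduce u) = foldr ccons s u.
Proof.
move=> ns; elim: u => //= l u IH.
change (foldr ccons s (ccons l (freduce u)) = ccons l (foldr ccons s u)).
rewrite foldr_ccons_lcons //; first by rewrite IH.
exact: freduce_nored.
Qed.

Lemma freduce_cat u v : freduce (u ++ v) = foldr ccons (freduce v) u.
Proof. by rewrite /freduce foldr_cat. Qed.

Lemma freduce_catl u v : freduce (freduce u ++ v) = freduce (u ++ v).
Proof. by rewrite !freduce_cat foldr_red // freduce_nored. Qed.

Lemma freduce_catr u v : freduce (u ++ freduce v) = freduce (u ++ v).
Proof. by rewrite !freduce_cat freduceK. Qed.

Lemma foldr_inv s u : nored s -> foldr ccons s (u ++ winv u) = s.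
Proof.
elim: u s => //= l u IH s ns.
rewrite winv_cons catA foldr_cat /= IH; last exact: ccons_nored.
exact: ccons_cancel.
Qed.

Lemma freduce_inv u v : freduce (u ++ winv u ++ v) = freduce v.
Proof. by rewrite catA freduce_cat foldr_inv // freduce_nored. Qed.

Lemma freduce_inv' u v : freduce (winv u ++ u ++ v) = freduce v.
Proof. by rewrite -{2}(winvK u) freduce_inv. Qed.

Lemma foldr_cong s u v : nored s -> freduce u = freduce v ->
  foldr ccons s u = foldr ccons s v.
Proof. by move=> ns E; rewrite -foldr_red // E foldr_red. Qed.

Lemma freduce_winv_cong u v : freduce u = freduce v ->
  freduce (winv u) = freduce (winv v).
Proof.
move=> E.
have h1 : freduce (winv u) = freduce (winv v ++ v ++ winv u).
  by rewrite freduce_inv'.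
have h2 : freduce (winv v) = freduce (winv v ++ u ++ winv u).
  rewrite freduce_cat.
  have -> : freduce (u ++ winv u) = [::].
    by rewrite -[u ++ winv u]cats0 -catA freduce_inv.
  by [].
rewrite h1 h2 !catA !freduce_cat; apply: foldr_cong; first exact: freduce_nored.
by rewrite -(freduce_catr (winv v) v) -(freduce_catr (winv v) u) E.
Qed.


Definition Fl (A : bool * nat -> seq letter) (l : letter) :=
  if l.2 then winv (A l.1) else A l.1.
Definition subst A (u : seq letter) := flatten (map (Fl A) u).

Lemma fapplyE A u : fapply A u = freduce (subst A u).
Proof. by []. Qed.

Lemma subst_cat A u v : subst A (u ++ v) = subst A u ++ subst A v.
Proof. by rewrite /subst map_cat flatten_cat. Qed.

Lemma subst_cons A l u : subst A (l :: u) = Fl A l ++ subst A u.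
Proof. by []. Qed.

Lemma Fl_linv A l : Fl A (linv l) = winv (Fl A l).
Proof. by case: l => a [] ; rewrite /Fl /linv /= ?winvK. Qed.

Lemma subst_winv A u : subst A (winv u) = winv (subst A u).
Proof.
elim: u => //= l u IH.
rewrite winv_cons subst_cat IH subst_cons winv_cat; congr (_ ++ _).
by rewrite /subst /= cats0 Fl_linv.
Qed.

Lemma subst_comp A B u : subst A (subst B u) = subst (fun v => subst A (B v)) u.
Proof.
elim: u => //= l u IH.
rewrite !subst_cons subst_cat IH; congr (_ ++ _).
by rewrite /Fl; case: l.2 => //; rewrite subst_winv.
Qed.

Lemma foldr_subst_red A s u : nored s ->
  foldr ccons s (subst A (freduce u)) = foldr ccons s (subst A u).
Proof.
elim: u s => //= l u IH s ns.
change (foldr ccons s (subst A (ccons l (freduce u))) =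
        foldr ccons s (Fl A l ++ subst A u)).
have E : forall r, foldr ccons s (subst A (ccons l r)) = foldr ccons s (Fl A l ++ subst A r).
  case=> [|b t] //=.
  case: ifP => // /eqP ->.
  rewrite subst_cons Fl_linv catA foldr_cat foldr_inv //.
  exact: foldr_nored.
rewrite E !foldr_cat IH //.
Qed.

Lemma subst_freduce A u : freduce (subst A (freduce u)) = freduce (subst A u).
Proof. exact: foldr_subst_red. Qed.

Lemma fapply_red A u : fapply A (freduce u) = fapply A u.
Proof. exact: subst_freduce. Qed.

Lemma subst_cong A B u : (forall v, freduce (A v) = freduce (B v)) ->
  freduce (subst A u) = freduce (subst B u).
Proof.
move=> H.
suff: forall s, nored s -> foldr ccons s (subst A u) = foldr ccons s (subst B u).
  by move=> h; apply: h.
elim: u => //= l u IH s ns.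
rewrite !subst_cons !foldr_cat IH //; apply: foldr_cong; first exact: foldr_nored.
rewrite /Fl; case: l.2; last exact: H.
exact: freduce_winv_cong.
Qed.

Lemma fapply_cong A B u : (forall v, freduce (A v) = freduce (B v)) ->
  fapply A u = fapply B u.
Proof. exact: subst_cong. Qed.

Lemma fapply_comp A B f : fapply A (fapply B f) = fapply (fun v => fapply A (B v)) f.
Proof.
rewrite !fapplyE subst_freduce subst_comp; apply: subst_cong => v.
by rewrite freduceK.
Qed.

Lemma subst_id u : subst (fun v => [:: (v, false)]) u = u.
Proof. by elim: u => //= [[a []]] u IH; rewrite subst_cons IH. Qed.

Lemma fapply_id u : fapply (fun v => [:: (v, false)]) u = freduce u.
Proof. by rewrite fapplyE subst_id. Qed.

Lemma freduce_isnored u : nored u -> reduced u.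
Proof. by move=> h; rewrite /reduced nored_freduce. Qed.

Lemma all_freduce (P : pred letter) u : all P u -> all P (freduce u).
Proof.
elim: u => //= l u IH /andP[Pl Pu].
have := IH Pu; case: (freduce u) => [|b t] /=; first by rewrite Pl.
by case: ifP => _ /andP[] //= -> ->; rewrite Pl.
Qed.

Lemma theta_cons w s g f :
  theta w (s :: g) f = theta w g (fapply (theta_gen_img w s) f).
Proof. by []. Qed.

Lemma theta_cat w a b f : theta w (a ++ b) f = theta w b (theta w a f).
Proof. by rewrite /theta foldl_cat. Qed.

Lemma theta_red w g x : freduce (theta w g (freduce x)) = freduce (theta w g x).
Proof. by case: g => [|s g] /=; rewrite ?freduceK // fapply_red. Qed.

Definition swp (j k : nat) := if k == j then j.+1 else if k == j.+1 then j else k.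

Lemma swpK j k : swp j (swp j k) = k.
Proof.
have [->|nj] := eqVneq k j.
  by rewrite /swp eqxx (_ : (j.+1 == j) = false) ?eqxx //; lia.
have [->|nj1] := eqVneq k j.+1.
  by rewrite /swp (_ : (j.+1 == j) = false) ?eqxx //; lia.
by rewrite /swp (negbTE nj) (negbTE nj1) (negbTE nj) (negbTE nj1).
Qed.

Lemma rho_img w j v :
  theta_gen_img w (Rho j) v = [:: ((v.1, swp j v.2), false)].
Proof.
have F : (j.+1 == j) = false by lia.
by case: v => [[] k] /=; rewrite /swp !xpair_eqE /=; case: (k == j); case: (k == j.+1).
Qed.

Lemma sig_img_y w j k : theta_gen_img w (Sig j) (true, k) = [:: ((true, k), false)].
Proof. by []. Qed.

Lemma subst_w_fix A w a b : (forall k, A (true, k) = [:: ((true, k), false)]) ->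
  subst A (w_at w a b) = w_at w a b.
Proof.
move=> H; elim: w => //= c w IH.
by rewrite subst_cons IH /Fl /= H; case: c => [c1 []].
Qed.

Lemma subst_w_rho w' j w a b :
  subst (theta_gen_img w' (Rho j)) (w_at w a b) = w_at w (swp j a) (swp j b).
Proof.
elim: w => // c w IH.
rewrite (_ : w_at (c :: w) a b = ((true, if c.1 then b else a), c.2) :: w_at w a b) //.
rewrite subst_cons IH /Fl rho_img.
by case: c => [[] []].
Qed.

Lemma freduce_cons l u : freduce (l :: u) = ccons l (freduce u).
Proof. by []. Qed.

Lemma freduce_winvl u : freduce (winv u ++ u) = [::].
Proof. by rewrite -[winv u ++ u]cats0 -catA freduce_inv'. Qed.
Lemma freduce_winvr u : freduce (u ++ winv u) = [::].
Proof. by rewrite -[u ++ winv u]cats0 -catA freduce_inv. Qed.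

Lemma sig_img_j w j : theta_gen_img w (Sig j) (false, j) = Fx j.+1 :: w_at w j j.+1.
Proof. by rewrite /= eqxx. Qed.
Lemma sig_img_j1 w j : theta_gen_img w (Sig j) (false, j.+1) = Fx j :: winv (w_at w j j.+1).
Proof. by rewrite /= xpair_eqE /= eqxx (_ : (j.+1 == j) = false) //; lia. Qed.
Lemma sig_img_o w j k : k != j -> k != j.+1 ->
  theta_gen_img w (Sig j) (false, k) = [:: ((false, k), false)].
Proof. by move=> h1 h2; rewrite /= !xpair_eqE /= (negbTE h1) (negbTE h2). Qed.

Arguments theta_gen_img : simpl never.

Lemma Fl_pos A v : Fl A (v, false) = A v.
Proof. by []. Qed.
Lemma Fl_neg A v : Fl A (v, true) = winv (A v).
Proof. by []. Qed.
Lemma subst1 A v : subst A [:: (v, false)] = A v.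
Proof. by rewrite /subst /= cats0. Qed.

Lemma freduce_fapply A u : freduce (fapply A u) = fapply A u.
Proof. exact: freduceK. Qed.

Lemma gen_invol w s f :
  fapply (theta_gen_img w s) (fapply (theta_gen_img w s) f) = freduce f.
Proof.
rewrite fapply_comp -fapply_id; apply: fapply_cong => v.
rewrite freduce_fapply.
case: s => j.
  case: v => [[] k].
    by rewrite sig_img_y fapplyE subst1 sig_img_y.
  have [->|nj] := eqVneq k j.
    rewrite sig_img_j fapplyE subst_cons subst_w_fix // Fl_pos sig_img_j1.
    by rewrite cat_cons freduce_cons freduce_winvl.
  have [->|nj1] := eqVneq k j.+1.
    rewrite sig_img_j1 fapplyE subst_cons subst_winv subst_w_fix // Fl_pos sig_img_j.
    by rewrite cat_cons freduce_cons freduce_winvr.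
  by rewrite sig_img_o // fapplyE subst1 sig_img_o.
rewrite rho_img fapplyE subst1 rho_img /= swpK.
by case: v.
Qed.

Lemma theta_inv w g f : freduce (theta w (rev g) (theta w g f)) = freduce f.
Proof.
elim: g f => [|s g IH] f //.
rewrite rev_cons -cats1 theta_cat theta_cons /= -fapply_red IH fapply_red.
by rewrite gen_invol freduceK.
Qed.

Arguments theta_gen_img : simpl never.

Section S.
Variable w : seq (bool * bool).
Variable i : nat.

Definition imgR (u0 u1 u2 : seq letter) (v : bool * nat) : seq letter :=
  if v == (false, i) then Fx i :: u0
  else if v == (false, i.+1) then Fx i.+1 :: u1
  else if v == (false, i.+2) then Fx i.+2 :: u2
  else [:: (v, false)].
Definition isY (u : seq letter) := all (fun l : letter => l.1.1) u.

Lemma R0 a b c : imgR a b c (false, i) = Fx i :: a.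
Proof. by rewrite /imgR eqxx. Qed.
Lemma R1 a b c : imgR a b c (false, i.+1) = Fx i.+1 :: b.
Proof. by rewrite /imgR !xpair_eqE /= eqxx (_ : (i.+1 == i) = false) //; lia. Qed.
Lemma R2 a b c : imgR a b c (false, i.+2) = Fx i.+2 :: c.
Proof.
have h1 : (i.+2 == i) = false by elim: i.
have h2 : (i.+2 == i.+1) = false by elim: i.
by rewrite /imgR !xpair_eqE /= h1 h2 eqxx.
Qed.
Lemma Ro a b c v : v != (false, i) -> v != (false, i.+1) -> v != (false, i.+2) ->
  imgR a b c v = [:: (v, false)].
Proof. by move=> h0 h1 h2; rewrite /imgR (negbTE h0) (negbTE h1) (negbTE h2). Qed.
Lemma Ry a b c k : imgR a b c (true, k) = [:: ((true, k), false)].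
Proof. by []. Qed.

Arguments imgR : simpl never.

Lemma subst_R_y a b c u : isY u -> subst (imgR a b c) u = u.
Proof.
elim: u => // [[[[] k] s]] u IH //= /IH {}IH.
by rewrite subst_cons IH /Fl Ry; case: s.
Qed.

Lemma R_cases (P : (bool * nat) -> Prop) :
  P (false, i) -> P (false, i.+1) -> P (false, i.+2) ->
  (forall v, v != (false, i) -> v != (false, i.+1) -> v != (false, i.+2) -> P v) ->
  forall v, P v.
Proof.
move=> h0 h1 h2 ho v.
have [->|n0] := eqVneq v (false, i) => //.
have [->|n1] := eqVneq v (false, i.+1) => //.
have [->|n2] := eqVneq v (false, i.+2) => //.
exact: ho.
Qed.

Lemma R_comp u0 u1 u2 v0 v1 v2 f : isY u0 -> isY u1 -> isY u2 ->
  fapply (imgR v0 v1 v2) (fapply (imgR u0 u1 u2) f) =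
  fapply (imgR (freduce (v0 ++ u0)) (freduce (v1 ++ u1)) (freduce (v2 ++ u2))) f.
Proof.
move=> y0 y1 y2; rewrite fapply_comp; apply: fapply_cong.
apply: R_cases.
- by rewrite freduce_fapply !R0 fapplyE subst_cons Fl_pos R0 subst_R_y //
    cat_cons !freduce_cons freduceK.
- by rewrite freduce_fapply !R1 fapplyE subst_cons Fl_pos R1 subst_R_y //
    cat_cons !freduce_cons freduceK.
- by rewrite freduce_fapply !R2 fapplyE subst_cons Fl_pos R2 subst_R_y //
    cat_cons !freduce_cons freduceK.
- by move=> v h0 h1 h2; rewrite freduce_fapply !Ro // fapplyE subst1 Ro.
Qed.

Lemma R_id f : fapply (imgR [::] [::] [::]) f = freduce f.
Proof.
rewrite -fapply_id; apply: fapply_cong; apply: R_cases.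
- by rewrite R0.
- by rewrite R1.
- by rewrite R2.
- by move=> v h0 h1 h2; rewrite Ro.
Qed.

Definition acts g u0 u1 u2 := [&& isY u0, isY u1 & isY u2] /\
  forall f, freduce (theta w g f) = fapply (imgR u0 u1 u2) f.

Lemma acts_nil : acts [::] [::] [::] [::].
Proof. by split => // f; rewrite R_id. Qed.

Lemma isY_freduce u : isY u -> isY (freduce u).
Proof. exact: all_freduce. Qed.
Lemma isY_cat u v : isY u -> isY v -> isY (u ++ v).
Proof. by move=> h1 h2; rewrite /isY all_cat; apply/andP. Qed.
Lemma isY_winv u : isY u -> isY (winv u).
Proof. by rewrite /isY /winv all_rev all_map. Qed.

Lemma acts_cat a b u0 u1 u2 v0 v1 v2 : acts a u0 u1 u2 -> acts b v0 v1 v2 ->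
  acts (a ++ b) (freduce (v0 ++ u0)) (freduce (v1 ++ u1)) (freduce (v2 ++ u2)).
Proof.
case=> /and3P[y0 y1 y2] Ha [/and3P[z0 z1 z2] Hb]; split.
  by rewrite !isY_freduce ?isY_cat.
by move=> f; rewrite theta_cat -theta_red Ha Hb R_comp.
Qed.

Lemma acts_inv g u0 u1 u2 : acts g u0 u1 u2 ->
  acts (rev g) (freduce (winv u0)) (freduce (winv u1)) (freduce (winv u2)).
Proof.
case=> /and3P[y0 y1 y2] Ha.
have yi : [&& isY (freduce (winv u0)), isY (freduce (winv u1)) & isY (freduce (winv u2))].
  by rewrite !isY_freduce ?isY_winv.
split => // f.
case/and3P: yi => yi0 yi1 yi2.
set h := fapply (imgR (freduce (winv u0)) (freduce (winv u1)) (freduce (winv u2))) f.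
have Eh : fapply (imgR u0 u1 u2) h = freduce f.
  by rewrite /h R_comp // !freduce_catr !freduce_winvr R_id.
rewrite -theta_red -Eh -Ha theta_red theta_inv /h freduce_fapply //.
Qed.

Definition commc u v :=
  freduce (freduce (freduce (freduce (winv v) ++ freduce (winv u)) ++ v) ++ u).

Lemma commc_l v : commc [::] v = [::].
Proof. by rewrite /commc cats0 !freduceK !freduce_catl cats0 freduce_catl freduce_winvl. Qed.
Lemma commc_r u : commc u [::] = [::].
Proof. by rewrite /commc /= cats0 !freduceK freduce_catl freduce_winvl. Qed.

Lemma acts_comm g h u0 u1 u2 v0 v1 v2 : acts g u0 u1 u2 -> acts h v0 v1 v2 ->
  acts (comm g h) (commc u0 v0) (commc u1 v1) (commc u2 v2).
Proof.
move=> Hg Hh; rewrite /comm /ginv.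
exact: (acts_cat Hg (acts_cat Hh (acts_cat (acts_inv Hg) (acts_inv Hh)))).
Qed.

Definition Tr (b0 b1 b2 : bool) g := exists u0 u1 u2, acts g u0 u1 u2 /\
  [&& b0 || nilp u0, b1 || nilp u1 & b2 || nilp u2].

Lemma Tr_gen (P : seq fvb_gen -> Prop) b0 b1 b2 :
  (forall s, P s -> Tr b0 b1 b2 s) -> forall g, gen_by P g -> Tr b0 b1 b2 g.
Proof.
move=> HP g; elim => {g}.
- by move=> s /HP.
- by exists [::], [::], [::]; split; [exact: acts_nil | rewrite !orbT].
- move=> a b _ [u0 [u1 [u2 [Ha fa]]]] _ [v0 [v1 [v2 [Hb fb]]]].
  exists (freduce (v0 ++ u0)), (freduce (v1 ++ u1)), (freduce (v2 ++ u2)).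
  split; first exact: acts_cat.
  case/and3P: fa => fa0 fa1 fa2; case/and3P: fb => fb0 fb1 fb2.
  apply/and3P; split.
  + case/orP: fa0 => [-> //|/nilP ->]; case/orP: fb0 => [-> //|/nilP ->]; by rewrite orbT.
  + case/orP: fa1 => [-> //|/nilP ->]; case/orP: fb1 => [-> //|/nilP ->]; by rewrite orbT.
  + case/orP: fa2 => [-> //|/nilP ->]; case/orP: fb2 => [-> //|/nilP ->]; by rewrite orbT.
- move=> a _ [u0 [u1 [u2 [Ha fa]]]].
  exists (freduce (winv u0)), (freduce (winv u1)), (freduce (winv u2)).
  split; first exact: acts_inv.
  case/and3P: fa => fa0 fa1 fa2.
  apply/and3P; split.
  + case/orP: fa0 => [-> //|/nilP ->]; by rewrite orbT.
  + case/orP: fa1 => [-> //|/nilP ->]; by rewrite orbT.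
  + case/orP: fa2 => [-> //|/nilP ->]; by rewrite orbT.
Qed.

Lemma Tr_comm a0 a1 a2 b0 b1 b2 g h : Tr a0 a1 a2 g -> Tr b0 b1 b2 h ->
  Tr (a0 && b0) (a1 && b1) (a2 && b2) (comm g h).
Proof.
move=> [u0 [u1 [u2 [Ha fa]]]] [v0 [v1 [v2 [Hb fb]]]].
exists (commc u0 v0), (commc u1 v1), (commc u2 v2).
split; first exact: acts_comm.
case/and3P: fa => fa0 fa1 fa2; case/and3P: fb => fb0 fb1 fb2.
apply/and3P; split.
+ case: a0 fa0 => /=; last by move/nilP ->; rewrite commc_l.
  by case: b0 fb0 => //= /nilP ->; rewrite commc_r.
+ case: a1 fa1 => /=; last by move/nilP ->; rewrite commc_l.
  by case: b1 fb1 => //= /nilP ->; rewrite commc_r.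
+ case: a2 fa2 => /=; last by move/nilP ->; rewrite commc_l.
  by case: b2 fb2 => //= /nilP ->; rewrite commc_r.
Qed.

Lemma theta_reduced g x : freduce x = x -> freduce (theta w g x) = theta w g x.
Proof.
elim: g x => //= s g IH x _; apply: IH; exact: freduce_fapply.
Qed.

Lemma Tr_ker n g : Tr false false false g -> in_ker n w g.
Proof.
move=> [u0 [u1 [u2 [[_ Ha] /and3P[/nilP e0 /nilP e1 /nilP e2]]]]] f _ /eqP rf.
subst u0 u1 u2.
by rewrite -theta_reduced // Ha R_id.
Qed.
End S.

Arguments theta_gen_img : simpl never.

Definition gidx (s : fvb_gen) := match s with Sig j => j | Rho j => j end.
Definition shiftg (i : nat) (s : fvb_gen) :=
  match s with Sig j => Sig (i + j) | Rho j => Rho (i + j) end.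

Definition absimg (s : fvb_gen) (v : bool * nat) : seq letter :=
  match s with
  | Sig j => match v with
     | (false, k) => if k == j then [:: ((false, j.+1), false); ((true, j * 3 + j.+1), false)]
                     else if k == j.+1 then [:: ((false, j), false); ((true, j * 3 + j.+1), true)]
                     else [:: (v, false)]
     | (true, _) => [:: (v, false)] end
  | Rho j => match v with
     | (false, k) => [:: ((false, swp j k), false)]
     | (true, c) => if c < 9 then [:: ((true, swp j (c %/ 3) * 3 + swp j (c %% 3)), false)]
                    else [:: ((true, 9 + swp j (c - 9)), false)] end
  end.

Definition thetaA (gs : seq fvb_gen) (u : seq letter) :=
  foldl (fun f s => fapply (absimg s) f) u gs.

Lemma swp_shift i j k : swp (i + j) (i + k) = i + swp j k.
Proof.
rewrite /swp eqn_add2l -addnS eqn_add2l.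
by case: (k == j) => //; case: (k == j.+1).
Qed.

Lemma swp_lt3 j a : j <= 1 -> a < 3 -> swp j a < 3.
Proof. by case: j => [|[|]] //; case: a => [|[|[|]]]. Qed.

Lemma code_div a b : b < 3 -> (a * 3 + b) %/ 3 = a.
Proof. move=> h; lia. Qed.
Lemma code_mod a b : b < 3 -> (a * 3 + b) %% 3 = b.
Proof. move=> h; lia. Qed.

Lemma subst1n A v : subst A [:: (v, true)] = winv (A v).
Proof. by rewrite /subst /= cats0. Qed.

Section S.
Variable w : seq (bool * bool).
Variable i : nat.

Definition ev (v : bool * nat) : seq letter :=
  match v with
  | (false, k) => [:: Fx (i + k)]
  | (true, c) => if c < 9 then w_at w (i + c %/ 3) (i + c %% 3) else [:: Fy (i + (c - 9))]
  end.

Lemma sim s v : gidx s <= 1 ->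
  freduce (subst (theta_gen_img w (shiftg i s)) (ev v)) = freduce (subst ev (absimg s v)).
Proof.
case: s => j /= hj.
- case: v => [[] k].
  + rewrite subst1 /ev; case: ifP => hc.
      by rewrite subst_w_fix.
    by rewrite /Fy subst1 sig_img_y.
  + rewrite /ev /Fx subst1 /absimg.
    have [->|nj] := eqVneq k j.
      rewrite ?eqxx sig_img_j subst_cons subst1 /Fl /=.
      by case: j hj => [|[|]] //= _; rewrite code_div // code_mod // ?addn0 ?addn1 ?addn2.
    have [->|nj1] := eqVneq k j.+1.
      rewrite addnS sig_img_j1 subst_cons.
      by case: j hj {nj} => [|[|]] //= _; rewrite subst1n /= code_div // code_mod // ?addn0 ?addn1 ?addn2.
    rewrite (@sig_img_o w (i + j) (i + k)); last 2 first.
      by rewrite eqn_add2l.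
      by rewrite -addnS eqn_add2l.
    by rewrite ?(negbTE nj) ?(negbTE nj1) subst1.
- case: v => [[] k] /=.
  + case: ifP => hc.
      rewrite subst_w_rho !swp_shift subst1 /=.
      have h1 : k %/ 3 < 3 by lia.
      have h2 : k %% 3 < 3 by lia.
      have h3 := swp_lt3 hj h1; have h4 := swp_lt3 hj h2.
      rewrite (_ : swp j (k %/ 3) * 3 + swp j (k %% 3) < 9); last by lia.
      by rewrite code_div // code_mod.
    rewrite !subst1 rho_img /= swp_shift.
    by rewrite addKn.
  + by rewrite /Fx subst1 rho_img /= swp_shift.
Qed.

Lemma theta_sim gs u : all (fun s => gidx s <= 1) gs ->
  freduce (theta w (map (shiftg i) gs) (subst ev u)) = fapply ev (thetaA gs u).
Proof.
elim: gs u => //= s gs IH u /andP[hs hgs].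
rewrite -theta_red.
have -> : freduce (fapply (theta_gen_img w (shiftg i s)) (subst ev u)) =
          freduce (subst ev (fapply (absimg s) u)).
  rewrite freduce_fapply fapplyE subst_comp subst_freduce subst_comp.
  apply: subst_cong => v; exact: sim.
by rewrite theta_red IH.
Qed.

Lemma theta_fix gs v : all (fun s => gidx s <= 1) gs ->
  (forall j, j <= 1 -> theta_gen_img w (Sig (i + j)) v = [:: (v, false)] /\
                       theta_gen_img w (Rho (i + j)) v = [:: (v, false)]) ->
  theta w (map (shiftg i) gs) [:: (v, false)] = [:: (v, false)].
Proof.
move=> hg H; elim: gs hg => //= s gs IH /andP[hs hgs].
rewrite fapplyE subst1.
have -> : theta_gen_img w (shiftg i s) v = [:: (v, false)].
  by case: s hs => j /= hj; case: (H j hj).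
exact: IH.
Qed.

Lemma theta_img g f :
  freduce (theta w g f) = fapply (fun v => freduce (theta w g [:: (v, false)])) f.
Proof.
elim: g f => [|s g IH] f /=.
  by rewrite -fapply_id; apply: fapply_cong.
rewrite IH fapply_comp; apply: fapply_cong => v.
by rewrite freduce_fapply freduceK IH (fapplyE (theta_gen_img w s)) fapply_red subst1.
Qed.

Definition rA (gs : seq fvb_gen) k := thetaA gs [:: ((false, k), false)].

Definition goodA (gs : seq fvb_gen) :=
  [&& all (fun s => gidx s <= 1) gs,
      all (fun k => rA gs k == ((false, k), false) :: behead (rA gs k)) (iota 0 3),
      all (fun k => all (fun l : letter => l.1.1) (behead (rA gs k))) (iota 0 3) &
      all (fun k => thetaA gs [:: ((true, 9 + k), false)] == [:: ((true, 9 + k), false)]) (iota 0 3)].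

Lemma isY_ev u : all (fun l : letter => l.1.1) u -> isY (subst ev u).
Proof.
elim: u => // [[[b c] s]] u IH /= /andP[hb hu].
rewrite subst_cons /isY all_cat; apply/andP; split; last exact: IH.
case: b hb => // _.
have H : isY (ev (true, c)).
  rewrite /ev; case: ifP => _; last by [].
  by rewrite /isY /w_at all_map; apply/allP.
by rewrite /Fl /=; case: s => //; apply: isY_winv.
Qed.

Lemma good_acts gs : goodA gs ->
  acts w i (map (shiftg i) gs) (subst ev (behead (rA gs 0)))
    (subst ev (behead (rA gs 1))) (subst ev (behead (rA gs 2))).
Proof.
case/and4P=> hidx hhead hY hy.
split.
  move/allP: hY => hY.
  by rewrite !isY_ev // hY // mem_iota.
move=> f; rewrite theta_img; apply: fapply_cong; case=> b k.
rewrite freduceK.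
have [lt|ge] := ltnP k i.
  rewrite theta_fix //; first by rewrite Ro // xpair_eqE /=; apply/eqP; lia.
  move=> j hj.
  have e1 : k != i + j by apply/eqP; lia.
  have e2 : k != (i + j).+1 by apply/eqP; lia.
  split; first by case: b; rewrite ?sig_img_y // sig_img_o.
  by rewrite rho_img /swp /= (negbTE e1) (negbTE e2).
have [ge3|lt3] := leqP (i + 3) k.
  rewrite theta_fix //; first by rewrite Ro // xpair_eqE /=; apply/eqP; lia.
  move=> j hj.
  have e1 : k != i + j by apply/eqP; lia.
  have e2 : k != (i + j).+1 by apply/eqP; lia.
  split; first by case: b; rewrite ?sig_img_y // sig_img_o.
  by rewrite rho_img /swp /= (negbTE e1) (negbTE e2).
have [k' [-> hk']] : exists k', k = i + k' /\ k' < 3 by exists (k - i); split; lia.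
case: b.
  have -> : [:: ((true, i + k'), false)] = subst ev [:: ((true, 9 + k'), false)].
    by rewrite subst1 /= addKn.
  rewrite theta_sim // (eqP (allP hy k' _)); last by rewrite mem_iota.
  by rewrite fapplyE subst1 /= addKn.
have -> : [:: ((false, i + k'), false)] = subst ev [:: ((false, k'), false)].
  by rewrite subst1.
rewrite theta_sim //.
have E := eqP (allP hhead k' _); rewrite mem_iota in E.
rewrite -/(rA gs k') E //= fapplyE subst_cons /Fl /=.
case: k' hk' {E} => [|[|[|]]] // _.
- by rewrite addn0 R0.
- by rewrite addn1 R1.
- by rewrite addn2 R2.
Qed.
End S.


Definition L01 := [:: Rho 0; Sig 0].
Definition L12 := [:: Rho 1; Sig 1].
Definition L02 := [:: Rho 1; Rho 0; Sig 0; Rho 1].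

Lemma lam01 i : lam i i.+1 = map (shiftg i) L01.
Proof. by rewrite /lam subnn /= addn0. Qed.
Lemma lam12 i : lam i.+1 i.+2 = map (shiftg i) L12.
Proof. by rewrite /lam subnn /= addn1. Qed.
Lemma lam02 i : lam i i.+2 = map (shiftg i) L02.
Proof. by rewrite /lam subSS subSnn /= addn0 addn1. Qed.

Lemma tt01 i : tt i i.+1 = map (shiftg i) (L01 ++ L01).
Proof. by rewrite /tt lam01 map_cat. Qed.
Lemma tt12 i : tt i.+1 i.+2 = map (shiftg i) (L12 ++ L12).
Proof. by rewrite /tt lam12 map_cat. Qed.
Lemma tt02 i : tt i i.+2 = map (shiftg i) (L02 ++ L02).
Proof. by rewrite /tt lam02 map_cat. Qed.
Lemma dd012 i : dd i i.+1 i.+2 = map (shiftg i) (rev L12 ++ rev L01 ++ L12 ++ L02).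
Proof. by rewrite /dd /ginv lam12 lam02 lam01 !map_cat !map_rev. Qed.
Lemma ee012 i : ee i i.+1 i.+2 = map (shiftg i) (rev L12 ++ rev L01 ++ L02 ++ L01).
Proof. by rewrite /ee /ginv lam12 lam02 lam01 !map_cat !map_rev. Qed.

Lemma good_Tr w i gs b0 b1 b2 : goodA gs ->
  [&& b0 || nilp (behead (rA gs 0)), b1 || nilp (behead (rA gs 1)) & b2 || nilp (behead (rA gs 2))] ->
  Tr w i b0 b1 b2 (map (shiftg i) gs).
Proof.
move=> hg /and3P[h0 h1 h2].
exists (subst (ev w i) (behead (rA gs 0))), (subst (ev w i) (behead (rA gs 1))),
       (subst (ev w i) (behead (rA gs 2))).
split; first exact: good_acts.
apply/and3P; split.
- by case/orP: h0 => [->//|/nilP ->]; rewrite orbT.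
- by case/orP: h1 => [->//|/nilP ->]; rewrite orbT.
- by case/orP: h2 => [->//|/nilP ->]; rewrite orbT.
Qed.

Theorem lemma4p1 (n : nat) (w : seq (bool * bool)) (i : nat) :
  (3 <= n)%N -> (1 <= i <= n - 2)%N ->
  forall g : seq fvb_gen,
    comm_sub (Qsub i) (comm_sub (Msub i) (Psub i)) g -> in_ker n w g.
Proof.
move=> _ _ g H; apply: (Tr_ker (i := i)).
have HQ : forall h, Qsub i h -> Tr w i true true false h.
  apply: Tr_gen => s [->|->].
    by rewrite tt01; apply: good_Tr; vm_compute.
  by rewrite ee012; apply: good_Tr; vm_compute.
have HM : forall h, Msub i h -> Tr w i false true true h.
  apply: Tr_gen => s [->|->].
    by rewrite tt12; apply: good_Tr; vm_compute.
  by rewrite dd012; apply: good_Tr; vm_compute.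
have HP : forall h, Psub i h -> Tr w i true false true h.
  apply: Tr_gen => s ->.
  by rewrite tt02; apply: good_Tr; vm_compute.
have HMP : forall h, comm_sub (Msub i) (Psub i) h -> Tr w i false false true h.
  apply: Tr_gen => s [h [k [hh [hk ->]]]].
  exact: (Tr_comm (HM _ hh) (HP _ hk)).
move: g H; apply: Tr_gen => s [h [k [hh [hk ->]]]].
exact: (Tr_comm (HQ _ hh) (HMP _ hk)).
Qed.
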